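(* Let $\mathcal V$ be a Monoidal category with countable products, let $C$ be an ordinary coalgebra in $\mathcal V$ and let $X$ be an object of $\mathcal V$. Then the map $\mathrm{hCoalg}(C,X\tilde T)\to\mathcal V(C,X)$, $t\mapsto\check t=t(1)\,\mathrm{pr}_1$ (where $t(1):C\to X\tilde T(1)=\prod_{k\in\mathbb N}X^{\otimes k}$ and $\mathrm{pr}_1$ is the projection onto $X$), is bijective.
   Context: $\mathcal O_{sk}$: objects $\mathbf n=\{1<\dots<n\}$, $n\ge0$ (identified with $n$), morphisms non-decreasing maps; $\sqcup$ ordered disjoint union; composition diagrammatic. $\mathcal V$ has invertible structure isomorphisms $\lambda^\phi:\otimes^{j\in J}\otimes^{i\in\phi^{-1}j}X_i\to\otimes^{i\in I}X_i$. A homotopy coalgebra is a functor $C:\mathcal O_{sk}^{op}\to\mathcal V$ with $\chi^I_{N_1,\dots,N_I}:\otimes^{i\in I}C(N_i)\to C(\sqcup_iN_i)$ natural in the $N_i$, $\chi^{\mathbf1}=\mathrm{id}$, $(\otimes^j\chi^{\phi^{-1}j})\chi^J=\lambda^\phi\chi^I$ for all $\phi:I\to J$; morphisms $t$ are families $t(k):C(k)\to G(k)$ natural in $\mathcal O_{sk}^{op}$ with $\chi^It=(\otimes^It)\gamma^I$. An ordinary coalgebra $C$ ($\Delta_I:C\to C^{\otimes I}$, $\Delta_{\mathbf1}=\mathrm{id}$, $\Delta_I=\Delta_J(\otimes_j\Delta_{\phi^{-1}j})\lambda^\phi$) is regarded as the homotopy coalgebra $C(J)=C^{\otimes J}$,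 $C(\phi^{op})=(\otimes_j\Delta_{\phi^{-1}j})\lambda^\phi$, $\chi^I_{n_1,\dots,n_I}=\lambda^{\sqcup_i\mathbf n_i\to I}$. The homotopy coalgebra $X\tilde T$: $X\tilde T(I)=\prod_{n\in\mathbb N^I}X^{\otimes\|n\|}$ with $\|n\|=\sum_in_i$; for $\phi:I\to J$ and $n\in\mathbb N^I$, $X\tilde T(\phi^{op})\mathrm{pr}_n=\mathrm{pr}_{\phi_*n}$ where $(\phi_*n)_j=\sum_{i\in\phi^{-1}j}n_i$; for $n=n_1\oplus\dots\oplus n_I\in\mathbb N^{N_1}\oplus\dots\oplus\mathbb N^{N_I}=\mathbb N^{\sqcup_iN_i}$, $\chi^I_{N_1,\dots,N_I}\mathrm{pr}_n=(\otimes^{i\in I}\mathrm{pr}_{n_i})\lambda^{\psi}$ with $\psi:\sqcup_i\mathbf{\|n_i\|}\to I$ sending the $i$-th block to $i$. *)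

(* Defs.v *)
(* Unbiased ("Monoidal" in the sense of
   Bespalov--Lyubashenko--Manzyuk) monoidal categories, encoded with lists. *)
From mathcomp Require Import all_boot.

Set Implicit Arguments.
Unset Strict Implicit.
Unset Printing Implicit Defensive.

Fixpoint HomL (Ob : Type) (Hom : Ob -> Ob -> Type) (xs ys : seq Ob) {struct xs} : Type :=
  match xs, ys with
  | [::], [::] => unit
  | x :: xs', y :: ys' => (Hom x y * HomL Hom xs' ys')%type
  | _, _ => Empty_set
  end.

(* Raw data of a Monoidal category with (chosen) countable products.
   [tensor xs] is the unbiased tensor product of the finite family xs
   (indexed by the object |xs| of O_sk); [lam L] is
   lambda^phi : (x)^{j in J} (x)^{i in phi^-1 j} X_i -> (x)^{i in I} X_i
   for the non-decreasing map phi : I -> J whose fibres are the blocks of L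
   (L : seq (seq Ob) of length J, flatten L the family (X_i)_{i in I}).
   [tensor1] is the strict equality (x)^{1} = Id on objects. *)
Record MonCatData := MkMonCat {
  Ob : Type;
  Hom : Ob -> Ob -> Type;
  idH : forall A, Hom A A;
  compH : forall A B C, Hom A B -> Hom B C -> Hom A C; (* diagrammatic *)
  tensor : seq Ob -> Ob;
  tensorH : forall xs ys, HomL Hom xs ys -> Hom (tensor xs) (tensor ys);
  tensor1 : forall x, tensor [:: x] = x;
  lam : forall L : seq (seq Ob), Hom (tensor (map tensor L)) (tensor (flatten L));
  prodO : forall T : countType, (T -> Ob) -> Ob;
  projH : forall (T : countType) (F : T -> Ob) (t : T), Hom (prodO F) (F t);
  tupH : forall (T : countType) (F : T -> Ob) (A : Ob),
           (forall t, Hom A (F t)) -> Hom A (prodO F) }.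

Arguments Hom {_} _ _.
Arguments idH {_} _.
Arguments compH {_ _ _ _} _ _.
Arguments tensor {_} _.
Arguments tensorH {_ _ _} _.
Arguments tensor1 {_} _.
Arguments lam {_} _.
Arguments prodO {_ _} _.
Arguments projH {_ _ _} _.
Arguments tupH {_ _ _ _} _.

Definition castH (V : MonCatData) (A B : Ob V) (e : A = B) : Hom A B :=
  match e in _ = B' return Hom A B' with erefl => idH A end.
Arguments castH {V A B} e.

Section ListOps.
Variable V : MonCatData.

Fixpoint idL (xs : seq (Ob V)) : HomL (@Hom V) xs xs :=
  match xs return HomL (@Hom V) xs xs with
  | [::] => tt
  | x :: xs' => (idH x, idL xs')
  end.

Fixpoint compL (xs ys zs : seq (Ob V)) {struct xs} :
  HomL (@Hom V) xs ys -> HomL (@Hom V) ys zs -> HomL (@Hom V) xs zs :=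
  match xs, ys, zs return
        HomL (@Hom V) xs ys -> HomL (@Hom V) ys zs -> HomL (@Hom V) xs zs with
  | [::], [::], [::] => fun _ _ => tt
  | x :: xs', y :: ys', z :: zs' =>
      fun F G => (compH F.1 G.1, @compL xs' ys' zs' F.2 G.2)
  | [::], [::], _ :: _ => fun _ G => match G with end
  | [::], _ :: _, _ => fun F _ => match F with end
  | _ :: _, [::], _ => fun F _ => match F with end
  | _ :: _, _ :: _, [::] => fun _ G => match G with end
  end.

Fixpoint catL (xs ys xs2 ys2 : seq (Ob V)) {struct xs} :
  HomL (@Hom V) xs ys -> HomL (@Hom V) xs2 ys2 ->
  HomL (@Hom V) (xs ++ xs2) (ys ++ ys2) :=
  match xs, ys return HomL (@Hom V) xs ys -> HomL (@Hom V) xs2 ys2 ->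
                      HomL (@Hom V) (xs ++ xs2) (ys ++ ys2) with
  | [::], [::] => fun _ G => G
  | x :: xs', y :: ys' => fun F G => (F.1, @catL xs' ys' xs2 ys2 F.2 G)
  | [::], _ :: _ => fun F _ => match F with end
  | _ :: _, [::] => fun F _ => match F with end
  end.

Fixpoint flattenH (L L' : seq (seq (Ob V))) {struct L} :
  HomL (HomL (@Hom V)) L L' -> HomL (@Hom V) (flatten L) (flatten L') :=
  match L, L' return HomL (HomL (@Hom V)) L L' ->
                     HomL (@Hom V) (flatten L) (flatten L') with
  | [::], [::] => fun _ => tt
  | l :: L0, l' :: L0' => fun F => catL F.1 (@flattenH L0 L0' F.2)
  | [::], _ :: _ => fun F => match F with end
  | _ :: _, [::] => fun F => match F with end
  end.

Fixpoint mapTH (L L' : seq (seq (Ob V))) {struct L} :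
  HomL (HomL (@Hom V)) L L' -> HomL (@Hom V) (map tensor L) (map tensor L') :=
  match L, L' return HomL (HomL (@Hom V)) L L' ->
                     HomL (@Hom V) (map tensor L) (map tensor L') with
  | [::], [::] => fun _ => tt
  | l :: L0, l' :: L0' => fun F => (tensorH F.1, @mapTH L0 L0' F.2)
  | [::], _ :: _ => fun F => match F with end
  | _ :: _, [::] => fun F => match F with end
  end.

(* (x)^{k in K} lambda^{f_k} for the composite I -f-> J -g-> K *)
Fixpoint lamL (LLL : seq (seq (seq (Ob V)))) :
  HomL (@Hom V) (map tensor (map (map tensor) LLL)) (map tensor (map flatten LLL)) :=
  match LLL return HomL (@Hom V) (map tensor (map (map tensor) LLL))
                               (map tensor (map flatten LLL)) with
  | [::] => tt
  | LL :: r => (lam LL, lamL r)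
  end.

Lemma lamid_eq (xs : seq (Ob V)) :
  tensor (map tensor (map (fun x => [:: x]) xs)) =
  tensor (flatten (map (fun x => [:: x]) xs)).
Proof.
congr tensor; elim: xs => [|x xs IH] //=; by rewrite tensor1 IH.
Qed.

Lemma lam1_eq (xs : seq (Ob V)) :
  tensor (map tensor [:: xs]) = tensor (flatten [:: xs]).
Proof. by rewrite /= tensor1 cats0. Qed.

Lemma coh_eq1 (LLL : seq (seq (seq (Ob V)))) :
  tensor (flatten (map (map tensor) LLL)) = tensor (map tensor (flatten LLL)).
Proof. by rewrite map_flatten. Qed.

Lemma coh_eq2 (LLL : seq (seq (seq (Ob V)))) :
  tensor (flatten (map flatten LLL)) = tensor (flatten (flatten LLL)).
Proof.
congr tensor; elim: LLL => [|l r IH] //=; by rewrite flatten_cat IH.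
Qed.

End ListOps.

Definition is_Monoidal (V : MonCatData) : Prop :=
  [/\ [/\ (forall (A B : Ob V) (f : Hom A B), compH (idH A) f = f),
      (forall (A B : Ob V) (f : Hom A B), compH f (idH B) = f)
      & (forall (A B C D : Ob V) (f : Hom A B) (g : Hom B C) (h : Hom C D),
          compH (compH f g) h = compH f (compH g h))],
   [/\ (forall xs : seq (Ob V), tensorH (idL xs) = idH (tensor xs)),
      (forall (xs ys zs : seq (Ob V)) (F : HomL (@Hom V) xs ys)
              (G : HomL (@Hom V) ys zs),
          tensorH (compL F G) = compH (tensorH F) (tensorH G))
      & (forall (x y : Ob V) (f : Hom x y),
          @tensorH V [:: x] [:: y] (f, tt) =
          compH (castH (tensor1 x)) (compH f (castH (esym (tensor1 y)))))],
   [/\ (forall (L L' : seq (seq (Ob V))) (F : HomL (HomL (@Hom V)) L L'),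
          compH (tensorH (mapTH F)) (lam L') = compH (lam L) (tensorH (flattenH F))),
      (forall L : seq (seq (Ob V)),
          exists g : Hom (tensor (flatten L)) (tensor (map tensor L)),
            compH (lam L) g = idH _ /\ compH g (lam L) = idH _),
      (forall xs : seq (Ob V), lam (map (fun x => [:: x]) xs) = castH (lamid_eq xs)),
      (forall xs : seq (Ob V), lam [:: xs] = castH (lam1_eq xs))
      & (forall LLL : seq (seq (seq (Ob V))),
          compH (compH (lam (map (map tensor) LLL)) (castH (coh_eq1 LLL)))
                (lam (flatten LLL)) =
          compH (compH (tensorH (lamL LLL)) (lam (map flatten LLL)))
                (castH (coh_eq2 LLL)))] &
   ((forall (T : countType) (F : T -> Ob V) (A : Ob V)
               (g : forall t, Hom A (F t)) (t : T),
          compH (tupH g) (projH t) = g t)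
    /\ (forall (T : countType) (F : T -> Ob V) (A : Ob V) (h : Hom A (prodO F)),
          h = tupH (fun t => compH h (projH t))))].

(* A morphism phi : I -> J of O_sk (non-decreasing map
   between finite ordinals) is encoded by the sequence cs of the cardinalities
   of its fibres: size cs = J, sumn cs = I (a bijective encoding).
   A homotopy coalgebra datum gives C(n), C(phi^op) : C(J) -> C(I) and
   chi^I_{N_1..N_I} : (x)^{i in I} C(N_i) -> C(N_1 + ... + N_I). *)
Record hdata (V : MonCatData) := HData {
  hob : nat -> Ob V;
  hmap : forall cs : seq nat, Hom (hob (size cs)) (hob (sumn cs));
  hchi : forall Ns : seq nat, Hom (tensor (map hob Ns)) (hob (sumn Ns)) }.
Arguments HData {V} hob hmap hchi.

Fixpoint mapHL (V : MonCatData) (A B : nat -> Ob V)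
    (t : forall k, Hom (A k) (B k)) (Ns : seq nat) :
    HomL (@Hom V) (map A Ns) (map B Ns) :=
  match Ns return HomL (@Hom V) (map A Ns) (map B Ns) with
  | [::] => tt
  | N :: Ns' => (t N, @mapHL V A B t Ns')
  end.

Definition is_hmorph (V : MonCatData) (A B : hdata V)
    (t : forall k, Hom (hob A k) (hob B k)) : Prop :=
  (forall cs : seq nat, compH (t (size cs)) (hmap B cs) = compH (hmap A cs) (t (sumn cs)))
  /\ (forall Ns : seq nat,
        compH (hchi A Ns) (t (sumn Ns)) = compH (tensorH (mapHL t Ns)) (hchi B Ns)).

Definition hCoalgHom (V : MonCatData) (A B : hdata V) :=
  {t : forall k, Hom (hob A k) (hob B k) | is_hmorph t}.

Section Coalg.
Variables (V : MonCatData) (C : Ob V) (Delta : forall n, Hom C (tensor (nseq n C))).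

Fixpoint DeltaL (cs : seq nat) :
  HomL (@Hom V) (nseq (size cs) C) (map tensor (map (fun k => nseq k C) cs)) :=
  match cs return HomL (@Hom V) (nseq (size cs) C)
                               (map tensor (map (fun k => nseq k C) cs)) with
  | [::] => tt
  | c :: r => (Delta c, DeltaL r)
  end.

Lemma flat_nseq_eq (cs : seq nat) :
  tensor (flatten (map (fun k => nseq k C) cs)) = tensor (nseq (sumn cs) C).
Proof. congr tensor; elim: cs => [|c cs IH] //=; by rewrite IH nseqD. Qed.

Lemma mapc_eq (Ns : seq nat) :
  tensor (map (fun n => tensor (nseq n C)) Ns) =
  tensor (map tensor (map (fun n => nseq n C) Ns)).
Proof. by rewrite -map_comp. Qed.

Definition coalg_map (cs : seq nat) :
  Hom (tensor (nseq (size cs) C)) (tensor (nseq (sumn cs) C)) :=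
  compH (tensorH (DeltaL cs))
        (compH (lam (map (fun k => nseq k C) cs)) (castH (flat_nseq_eq cs))).

Definition coalg_chi (Ns : seq nat) :
  Hom (tensor (map (fun n => tensor (nseq n C)) Ns)) (tensor (nseq (sumn Ns) C)) :=
  compH (castH (mapc_eq Ns))
        (compH (lam (map (fun n => nseq n C) Ns)) (castH (flat_nseq_eq Ns))).

Definition is_coalgebra : Prop :=
  Delta 1 = castH (esym (tensor1 C)) /\
  (forall cs : seq nat, Delta (sumn cs) = compH (Delta (size cs)) (coalg_map cs)).

Definition coalg_h : hdata V :=
  HData (fun n => tensor (nseq n C)) coalg_map coalg_chi.
End Coalg.

Section XT.
Variables (V : MonCatData) (X : Ob V).

Definition XTF (k : nat) (n : k.-tuple nat) : Ob V := tensor (nseq (sumn n) X).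
Definition XTob (k : nat) : Ob V := prodO (@XTF k).

Lemma pushT_proof (cs : seq nat) (n : seq nat) :
  size (map sumn (reshape cs n)) == size cs.
Proof. by rewrite size_map size_reshape. Qed.

Definition pushT (cs : seq nat) (n : (sumn cs).-tuple nat) : (size cs).-tuple nat :=
  @Tuple (size cs) nat (map sumn (reshape cs n)) (pushT_proof cs n).

Lemma pushE (cs : seq nat) (n : (sumn cs).-tuple nat) :
  XTF (pushT n) = XTF n.
Proof.
rewrite /XTF /= -sumn_flatten reshapeKr //.
by rewrite size_tuple.
Qed.

Definition XTmap (cs : seq nat) : Hom (XTob (size cs)) (XTob (sumn cs)) :=
  tupH (F := @XTF (sumn cs))
       (fun n => compH (projH (F := @XTF (size cs)) (pushT n)) (castH (pushE n))).

Definition tup (N : nat) (s : seq nat) : N.-tuple nat := insubd (nseq_tuple N 0) s.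

Fixpoint blocksL (Ns : seq nat) (n : seq nat) {struct Ns} : seq (seq (Ob V)) :=
  match Ns with
  | [::] => [::]
  | N :: Ns' => nseq (sumn (tup N (take N n))) X :: blocksL Ns' (drop N n)
  end.

Fixpoint prL (Ns : seq nat) (n : seq nat) {struct Ns} :
  HomL (@Hom V) (map XTob Ns) (map tensor (blocksL Ns n)) :=
  match Ns return HomL (@Hom V) (map XTob Ns) (map tensor (blocksL Ns n)) with
  | [::] => tt
  | N :: Ns' => (projH (F := @XTF N) (tup N (take N n)), prL Ns' (drop N n))
  end.

Lemma blocks_flatten (Ns : seq nat) (s : seq nat) :
  size s = sumn Ns -> flatten (blocksL Ns s) = nseq (sumn s) X.
Proof.
elim: Ns s => [|N Ns IH] s /=.
  by case: s.
move=> hs; have hN : size (take N s) == N.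
  by rewrite size_take hs; case: ltnP => // h; apply/eqP/anti_leq;
     rewrite h leq_addr.
rewrite insubdK // IH; last by rewrite size_drop hs addKn.
by rewrite -nseqD -sumn_cat cat_take_drop.
Qed.

Lemma blocksE (Ns : seq nat) (n : (sumn Ns).-tuple nat) :
  tensor (flatten (blocksL Ns n)) = XTF n.
Proof. by rewrite /XTF blocks_flatten // size_tuple. Qed.

Definition XTchi (Ns : seq nat) : Hom (tensor (map XTob Ns)) (XTob (sumn Ns)) :=
  tupH (F := @XTF (sumn Ns))
       (fun n => compH (tensorH (prL Ns n))
                       (compH (lam (blocksL Ns n)) (castH (blocksE n)))).

Definition XT_h : hdata V := HData XTob XTmap XTchi.

Definition tup1 : 1.-tuple nat := [tuple 1].

Lemma xt1_eq : XTF tup1 = X.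
Proof. by rewrite /XTF /= tensor1. Qed.
End XT.

Definition check (V : MonCatData) (C : Ob V)
    (Delta : forall n, Hom C (tensor (nseq n C))) (X : Ob V)
    (t : hCoalgHom (coalg_h Delta) (XT_h X)) : Hom C X :=
  compH (castH (esym (tensor1 C)))
        (compH (sval t 1)
               (compH (projH (F := @XTF V X 1) (tup1)) (castH (xt1_eq X)))).

(* Main.v *)
Require Import Defs.
From mathcomp Require Import all_boot.
From Stdlib Require Import ProofIrrelevance FunctionalExtensionality Eqdep ClassicalEpsilon.
Set Implicit Arguments. Unset Strict Implicit. Unset Printing Implicit Defensive.

Section Het.
Variable V : MonCatData.
Hypothesis hV : is_Monoidal V.

Definition pk (A B : Ob V) (f : Hom A B) : {A : Ob V & {B : Ob V & Hom A B}} :=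
  existT _ A (existT _ B f).
Definition pkL (xs ys : seq (Ob V)) (F : HomL (@Hom V) xs ys) :
  {xs : seq (Ob V) & {ys : seq (Ob V) & HomL (@Hom V) xs ys}} :=
  existT _ xs (existT _ ys F).

Lemma pk_inj (A B : Ob V) (f g : Hom A B) : pk f = pk g -> f = g.
Proof. move=> H; exact: (EqdepTheory.inj_pairT2 _ _ _ _ _ (EqdepTheory.inj_pairT2 _ _ _ _ _ H)). Qed.

Lemma pkL_inj (xs ys : seq (Ob V)) (f g : HomL (@Hom V) xs ys) : pkL f = pkL g -> f = g.
Proof. move=> H; exact: (EqdepTheory.inj_pairT2 _ _ _ _ _ (EqdepTheory.inj_pairT2 _ _ _ _ _ H)). Qed.

Lemma pk_ends (A B A' B' : Ob V) (f : Hom A B) (f' : Hom A' B') :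
  pk f = pk f' -> (A = A') * (B = B').
Proof.
move=> H; have eA : A = A' := f_equal (@projT1 _ _) H; subst A'.
have {}H := EqdepTheory.inj_pairT2 _ _ _ _ _ H.
by have eB : B = B' := f_equal (@projT1 _ _) H; subst B'.
Qed.

Lemma pk_elim (A B A' B' : Ob V) (f : Hom A B) (f' : Hom A' B') (P : forall A B, Hom A B -> Prop) :
  pk f = pk f' -> P A B f -> P A' B' f'.
Proof.
move=> H; have [eA eB] := pk_ends H; subst A' B'.
by move/pk_inj: H => ->.
Qed.

Lemma pkL_ends (xs ys xs' ys' : seq (Ob V)) (f : HomL (@Hom V) xs ys) (f' : HomL (@Hom V) xs' ys') :
  pkL f = pkL f' -> (xs = xs') * (ys = ys').
Proof.
move=> H; have eA : xs = xs' := f_equal (@projT1 _ _) H; subst xs'.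
have {}H := EqdepTheory.inj_pairT2 _ _ _ _ _ H.
by have eB : ys = ys' := f_equal (@projT1 _ _) H; subst ys'.
Qed.

Lemma pk_castE (A B : Ob V) (e : A = B) : pk (castH e) = pk (idH A).
Proof. by case: B / e. Qed.

Lemma pk_comp (A B C A' B' C' : Ob V) (f : Hom A B) (g : Hom B C) (f' : Hom A' B') (g' : Hom B' C') :
  pk f = pk f' -> pk g = pk g' -> pk (compH f g) = pk (compH f' g').
Proof.
move=> H1 H2; have [eA eB] := pk_ends H1; have [_ eC] := pk_ends H2.
subst A' B' C'; by rewrite (pk_inj H1) (pk_inj H2).
Qed.

Lemma Vidl (A B : Ob V) (f : Hom A B) : compH (idH A) f = f.
Proof. by case: hV => [[]]. Qed.
Lemma Vidr (A B : Ob V) (f : Hom A B) : compH f (idH B) = f.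
Proof. by case: hV => [[]]. Qed.
Lemma VcompA (A B C D : Ob V) (f : Hom A B) (g : Hom B C) (h : Hom C D) :
  compH (compH f g) h = compH f (compH g h).
Proof. by case: hV => [[]]. Qed.
Lemma T_id (xs : seq (Ob V)) : tensorH (idL xs) = idH (tensor xs).
Proof. by case: hV => _ []. Qed.
Lemma T_comp xs ys zs (F : HomL (@Hom V) xs ys) (G : HomL (@Hom V) ys zs) :
  tensorH (compL F G) = compH (tensorH F) (tensorH G).
Proof. by case: hV => _ []. Qed.
Lemma T_one (x y : Ob V) (f : Hom x y) :
  @tensorH V [:: x] [:: y] (f, tt) =
  compH (castH (tensor1 x)) (compH f (castH (esym (tensor1 y)))).
Proof. by case: hV => _ []. Qed.
Lemma lam_nat (L L' : seq (seq (Ob V))) (F : HomL (HomL (@Hom V)) L L') :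
  compH (tensorH (mapTH F)) (lam L') = compH (lam L) (tensorH (flattenH F)).
Proof. by case: hV => _ _ []. Qed.
Lemma lam_inv (L : seq (seq (Ob V))) :
  exists g : Hom (tensor (flatten L)) (tensor (map tensor L)),
    compH (lam L) g = idH _ /\ compH g (lam L) = idH _.
Proof. by case: hV => _ _ []. Qed.
Lemma lam_id (xs : seq (Ob V)) : lam (map (fun x => [:: x]) xs) = castH (lamid_eq xs).
Proof. by case: hV => _ _ []. Qed.
Lemma lam_1 (xs : seq (Ob V)) : lam [:: xs] = castH (lam1_eq xs).
Proof. by case: hV => _ _ []. Qed.
Lemma lam_coh (LLL : seq (seq (seq (Ob V)))) :
  compH (compH (lam (map (map tensor) LLL)) (castH (coh_eq1 LLL)))
        (lam (flatten LLL)) =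
  compH (compH (tensorH (lamL LLL)) (lam (map flatten LLL)))
        (castH (coh_eq2 LLL)).
Proof. by case: hV => _ _ []. Qed.
Lemma proj_tup (T : countType) (F : T -> Ob V) (A : Ob V)
   (g : forall t, Hom A (F t)) (t : T) : compH (tupH g) (projH t) = g t.
Proof. by case: hV => _ _ _ []. Qed.
Lemma prod_ext (T : countType) (F : T -> Ob V) (A : Ob V) (h h' : Hom A (prodO F)) :
  (forall t, compH h (projH t) = compH h' (projH t)) -> h = h'.
Proof.
case: hV => _ _ _ [_ H] E; rewrite (H _ _ _ h) (H _ _ _ h').
by congr tupH; apply: functional_extensionality_dep.
Qed.

Lemma pk_compA (A B C D : Ob V) (f : Hom A B) (g : Hom B C) (h : Hom C D) :
  pk (compH (compH f g) h) = pk (compH f (compH g h)).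
Proof. by rewrite VcompA. Qed.

Lemma pk_idl (A B A' : Ob V) (f : Hom A B) (g : Hom A' A) : pk g = pk (idH A) -> pk (compH g f) = pk f.
Proof. move=> H; rewrite (pk_comp H (erefl (pk f))); by rewrite Vidl. Qed.
Lemma pk_idr (A B B' : Ob V) (f : Hom A B) (g : Hom B B') : pk g = pk (idH B) -> pk (compH f g) = pk f.
Proof. move=> H; rewrite (pk_comp (erefl (pk f)) H); by rewrite Vidr. Qed.

Lemma pk_T (xs ys xs' ys' : seq (Ob V)) (F : HomL (@Hom V) xs ys) (F' : HomL (@Hom V) xs' ys') :
  pkL F = pkL F' -> pk (tensorH F) = pk (tensorH F').
Proof.
move=> H; have [e1 e2] := pkL_ends H; subst xs' ys'; by rewrite (pkL_inj H).
Qed.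

Lemma pkL_cons (x y x' y' : Ob V) (xs ys xs' ys' : seq (Ob V)) (f : Hom x y) (f' : Hom x' y')
   (F : HomL (@Hom V) xs ys) (F' : HomL (@Hom V) xs' ys') :
  pk f = pk f' -> pkL F = pkL F' ->
  @pkL (x :: xs) (y :: ys) (f, F) = @pkL (x' :: xs') (y' :: ys') (f', F').
Proof.
move=> H1 H2; have [e1 e2] := pk_ends H1; have [e3 e4] := pkL_ends H2.
subst; by rewrite (pk_inj H1) (pkL_inj H2).
Qed.

Lemma pk_lam (L L' : seq (seq (Ob V))) : L = L' -> pk (lam L) = pk (lam L').
Proof. by move=> ->. Qed.

Lemma pk_cast_id (A B : Ob V) (e : A = B) : pk (castH e) = pk (idH B).
Proof. by case: B / e. Qed.

Definition Pk := {A : Ob V & {B : Ob V & Hom A B}}.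

Definition hc (p q : Pk) : Pk :=
  match p, q with existT A (existT B f), existT B' (existT D g) =>
    match excluded_middle_informative (B = B') with
    | left e => pk (compH f (compH (castH e) g))
    | right _ => p end end.

Lemma pk_compE (A B C : Ob V) (f : Hom A B) (g : Hom B C) :
  pk (compH f g) = hc (pk f) (pk g).
Proof.
rewrite /hc /=; case: excluded_middle_informative => [e|n]; last by case: n.
by rewrite (proof_irrelevance _ e erefl) /= Vidl.
Qed.

Lemma hc_neq (A B : Ob V) (f : Hom A B) C' D (h : Hom C' D) :
  B <> C' -> hc (pk f) (existT _ C' (existT _ D h)) = pk f.
Proof. move=> n; rewrite /hc /=; by case: excluded_middle_informative. Qed.

Lemma hc_pair (A B C : Ob V) (f : Hom A B) (g : Hom B C) (r : Pk) :
  hc (pk f) (hc (pk g) r) = hc (pk (compH f g)) r.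
Proof.
case: r => C' [D h].
have [e|n] := excluded_middle_informative (C = C').
  subst C'; change (hc (pk f) (hc (pk g) (pk h)) = hc (pk (compH f g)) (pk h)).
  rewrite -(pk_compE g h) -(pk_compE f (compH g h)) -(pk_compE (compH f g) h).
  by rewrite VcompA.
rewrite (hc_neq g h n) (hc_neq (compH f g) h n); exact: (esym (pk_compE f g)).
Qed.

Lemma hc_castr (A B B' : Ob V) (f : Hom A B) (e : B = B') : hc (pk f) (pk (castH e)) = pk f.
Proof. by rewrite -pk_compE; case: B' / e; rewrite Vidr. Qed.

Lemma hc_idr (A B : Ob V) (f : Hom A B) : hc (pk f) (pk (idH B)) = pk f.
Proof. by rewrite -pk_compE Vidr. Qed.

Lemma hc_idl1 (A B : Ob V) (g : Hom A B) : hc (pk (idH A)) (pk g) = pk g.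
Proof. by rewrite -pk_compE Vidl. Qed.

Lemma hc_idl (A B : Ob V) (g : Hom A B) r : hc (pk (idH A)) (hc (pk g) r) = hc (pk g) r.
Proof. by rewrite hc_pair Vidl. Qed.

Lemma hc_dom (A B : Ob V) (g : Hom A B) r : projT1 (hc (pk g) r) = A.
Proof.
case: r => C' [D h]; rewrite /hc /=; by case: excluded_middle_informative.
Qed.

Lemma hc_idlg (A : Ob V) (q : Pk) : projT1 q = A -> hc (pk (idH A)) q = q.
Proof.
case: q => A' [D h] /= e; subst A'.
transitivity (pk (compH (idH A) h)); [exact: esym (pk_compE _ _) | by rewrite Vidl].
Qed.

Lemma hc_idrg (A B B' : Ob V) (f : Hom A B) : B = B' -> hc (pk f) (pk (idH B')) = pk f.
Proof. move=> e; subst B'; exact: hc_idr. Qed.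

Lemma castcomp (A B D : Ob V) (e1 : A = B) (e2 : B = D) :
  compH (castH e1) (castH e2) = castH (etrans e1 e2).
Proof. case: D / e2 => /=; exact: Vidr. Qed.

Lemma castcomp' (A B D E : Ob V) (e1 : A = B) (e2 : B = D) (h : Hom D E) :
  compH (castH e1) (compH (castH e2) h) = compH (castH (etrans e1 e2)) h.
Proof. by rewrite -VcompA castcomp. Qed.

End Het.

Ltac hnorm hV := repeat rewrite (VcompA hV); repeat rewrite (castcomp hV); repeat rewrite (castcomp' hV); repeat first [rewrite -(hc_pair hV) | rewrite (pk_compE hV)]; repeat rewrite (hc_castr hV);
  repeat rewrite pk_cast_id; repeat rewrite (hc_idl hV); repeat rewrite (hc_idl1 hV).

Section Main.
Variables (V : MonCatData) (hV : is_Monoidal V) (C : Ob V)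
  (Delta : forall n : nat, Hom C (tensor (nseq n C))) (hC : is_coalgebra Delta) (X : Ob V).

Notation nC := (fun k : nat => nseq k C).

Fixpoint DLL (B : seq (seq nat)) :
  HomL (HomL (@Hom V)) (map nC (map size B)) (map (map tensor) (map (map nC) B)) :=
  match B with [::] => tt | b :: B' => (DeltaL Delta b, DLL B') end.

Lemma pkL_cat (xs ys xs2 ys2 xs' ys' xs2' ys2' : seq (Ob V))
  (F : HomL (@Hom V) xs ys) (G : HomL (@Hom V) xs2 ys2)
  (F' : HomL (@Hom V) xs' ys') (G' : HomL (@Hom V) xs2' ys2') :
  pkL F = pkL F' -> pkL G = pkL G' -> pkL (catL F G) = pkL (catL F' G').
Proof.
move=> H1 H2; have [e1 e2] := pkL_ends H1; have [e3 e4] := pkL_ends H2.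
subst; by rewrite (pkL_inj H1) (pkL_inj H2).
Qed.

Lemma DeltaL_cat (b c : seq nat) :
  pkL (DeltaL Delta (b ++ c)) = pkL (catL (DeltaL Delta b) (DeltaL Delta c)).
Proof.
elim: b => [|a b IH] //=.
exact: pkL_cons.
Qed.

Lemma flatDLL B : pkL (flattenH (DLL B)) = pkL (DeltaL Delta (flatten B)).
Proof.
elim: B => [|b B IH] //=.
rewrite DeltaL_cat; exact: pkL_cat.
Qed.

Lemma flat_nC (cs : seq nat) : flatten (map nC cs) = nseq (sumn cs) C.
Proof. elim: cs => [|c cs IH] //=; by rewrite IH nseqD. Qed.

Lemma sumn_size (B : seq (seq nat)) : sumn (map size B) = size (flatten B).
Proof. elim: B => [|b B IH] //=; by rewrite IH size_cat. Qed.

Lemma eK (B : seq (seq nat)) :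
  tensor (flatten (map nC (map size B))) = tensor (nseq (size (flatten B)) C).
Proof. by rewrite flat_nC sumn_size. Qed.

Lemma K (B : seq (seq nat)) :
  pk (compH (tensorH (mapTH (DLL B)))
        (compH (tensorH (lamL (map (map nC) B))) (lam (map flatten (map (map nC) B))))) =
  pk (compH (lam (map nC (map size B))) (compH (castH (eK B))
        (compH (tensorH (DeltaL Delta (flatten B))) (lam (map nC (flatten B)))))).
Proof.
have H := f_equal (@pk V _ _) (lam_coh hV (map (map nC) B)).
move: H; hnorm hV => H; hnorm hV.
rewrite -H (hc_pair hV) (lam_nat hV) -(hc_pair hV).
congr hc; congr hc.
  exact: pk_T (flatDLL B).
by apply: pk_lam; rewrite map_flatten.
Qed.

Fixpoint fsL (f : Hom C X) (m : nat) : HomL (@Hom V) (nseq m C) (nseq m X) :=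
  match m with 0 => tt | m'.+1 => (f, fsL f m') end.

Lemma eC (n : seq nat) : tensor (flatten (map nC n)) = tensor (nseq (sumn n) C).
Proof. by rewrite flat_nC. Qed.

Definition core_def (f : Hom C X) (n : seq nat) :
  Hom (tensor (nseq (size n) C)) (tensor (nseq (sumn n) X)) :=
  compH (tensorH (DeltaL Delta n))
    (compH (lam (map nC n)) (compH (castH (eC n)) (tensorH (fsL f (sumn n))))).

Fact core_key : unit. Proof. exact: tt. Qed.
Definition core := locked_with core_key core_def.
Lemma coreE : core = core_def. Proof. exact: unlock. Qed.

Lemma coassoc_pk (b : seq nat) :
  pk (Delta (sumn b)) = pk (compH (compH (Delta (size b)) (tensorH (DeltaL Delta b))) (lam (map nC b))).
Proof. case: hC => _ ->; rewrite /coalg_map; hnorm hV; done. Qed.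

Lemma DSum (B : seq (seq nat)) :
  pkL (DeltaL Delta (map sumn B)) =
  pkL (compL (compL (DeltaL Delta (map size B)) (mapTH (DLL B))) (lamL (map (map nC) B))).
Proof.
elim: B => [|b B IH] //=.
apply: pkL_cons => //; exact: coassoc_pk.
Qed.

Lemma esz (B : seq (seq nat)) :
  tensor (nseq (sumn (map size B)) C) = tensor (nseq (size (flatten B)) C).
Proof. by rewrite sumn_size. Qed.

Lemma Nat (f : Hom C X) (B : seq (seq nat)) :
  pk (core f (map sumn B)) =
  pk (compH (coalg_map Delta (map size B)) (compH (castH (esz B)) (core f (flatten B)))).
Proof.
rewrite coreE /core_def /coalg_map; hnorm hV.
rewrite (pk_T (DSum B)) !(T_comp hV).
hnorm hV.
rewrite (@pk_lam _ _ (map flatten (map (map nC) B))); last first.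
  by rewrite -!map_comp; apply: eq_map => b /=; rewrite flat_nC.
rewrite (hc_pair hV (tensorH (lamL _))) (hc_pair hV (tensorH (mapTH _))) K.
hnorm hV.
by rewrite sumn_flatten.
Qed.


Notation bC := (fun b : seq nat => nseq (sumn b) C).
Notation bX := (fun b : seq nat => nseq (sumn b) X).

Fixpoint FSL (f : Hom C X) (B : seq (seq nat)) :
  HomL (HomL (@Hom V)) (map bC B) (map bX B) :=
  match B with [::] => tt | b :: B' => (fsL f (sumn b), FSL f B') end.

Lemma eC' (b : seq nat) : tensor (flatten (map nC b)) = tensor (nseq (sumn b) C).
Proof. by rewrite flat_nC. Qed.

Fixpoint castsL (B : seq (seq nat)) :
  HomL (@Hom V) (map tensor (map flatten (map (map nC) B))) (map tensor (map bC B)) :=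
  match B with [::] => tt | b :: B' => (castH (eC' b), castsL B') end.

Definition coreL (f : Hom C X) (B : seq (seq nat)) :=
  compL (compL (compL (mapTH (DLL B)) (lamL (map (map nC) B))) (castsL B)) (mapTH (FSL f B)).

Lemma castsL_id B : pkL (castsL B) = pkL (idL (map tensor (map bC B))).
Proof. elim: B => [|b B IH] //=; apply: pkL_cons => //; exact: pk_cast_id. Qed.

Lemma fsL_cat f a b : pkL (fsL f (a + b)) = pkL (catL (fsL f a) (fsL f b)).
Proof. elim: a => [|a IH] //=; exact: pkL_cons. Qed.

Lemma flatFSL f B : pkL (flattenH (FSL f B)) = pkL (fsL f (sumn (map sumn B))).
Proof. elim: B => [|b B IH] //=; rewrite fsL_cat; exact: pkL_cat. Qed.

Lemma Chi (f : Hom C X) (B : seq (seq nat)) :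
  pk (compH (tensorH (coreL f B)) (lam (map bX B))) =
  pk (compH (lam (map nC (map size B))) (compH (castH (eK B)) (core f (flatten B)))).
Proof.
rewrite /coreL coreE /core_def !(T_comp hV); hnorm hV.
rewrite (pk_T (castsL_id B)) (T_id hV) (hc_idl hV).
rewrite -(pk_compE hV (tensorH (mapTH (FSL f B)))) (lam_nat hV) (pk_compE hV).
rewrite (@pk_lam _ (map bC B) (map flatten (map (map nC) B))); last first.
  by rewrite -!map_comp; apply: eq_map => b /=; rewrite flat_nC.
rewrite (hc_pair hV (tensorH (lamL _))) (hc_pair hV (tensorH (mapTH _))) K.
hnorm hV.
rewrite (pk_T (flatFSL f B)).
by rewrite sumn_flatten.
Qed.


Lemma esize k (n : k.-tuple nat) : tensor (nseq k C) = tensor (nseq (size n) C).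
Proof. by rewrite size_tuple. Qed.

Definition tc (f : Hom C X) k (n : k.-tuple nat) : Hom (tensor (nseq k C)) (XTF X n) :=
  compH (castH (esize n)) (core f n).

Definition tf (f : Hom C X) k : Hom (tensor (nseq k C)) (XTob X k) :=
  tupH (F := @XTF V X k) (@tc f k).

Lemma tf_proj f k (n : k.-tuple nat) : compH (tf f k) (projH n) = tc f n.
Proof. exact: proj_tup. Qed.

Lemma nat_tf f cs :
  compH (tf f (size cs)) (XTmap X cs) = compH (coalg_map Delta cs) (tf f (sumn cs)).
Proof.
apply: (prod_ext hV) => n.
rewrite (VcompA hV (tf f (size cs))) (VcompA hV (coalg_map Delta cs)) tf_proj.
rewrite /XTmap (proj_tup hV) -(VcompA hV (tf f (size cs))) tf_proj.
apply: pk_inj; rewrite /tc; hnorm hV.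
have hs : size n = sumn cs by rewrite size_tuple.
change (tval (pushT n)) with (map sumn (reshape cs n)).
rewrite Nat; hnorm hV.
rewrite reshapeKr ?hs //.
have -> : map size (reshape cs n) = cs by apply: reshapeKl; rewrite hs.
done.
Qed.


Lemma tupE N (s : seq nat) : size s = N -> tval (tup N s) = s.
Proof. by move=> h; rewrite val_insubd h eqxx. Qed.

Lemma core_pk f b :
  pk (core f b) = pk (compH (compH (compH (tensorH (DeltaL Delta b)) (lam (map nC b)))
                     (castH (eC' b))) (tensorH (fsL f (sumn b)))).
Proof. rewrite coreE /core_def; hnorm hV; done. Qed.

Lemma MP f (Ns : seq nat) (s : seq nat) : size s = sumn Ns ->
  pkL (compL (@mapHL V (fun n => tensor (nseq n C)) (XTob X) (tf f) Ns) (prL X Ns s)) =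
  pkL (coreL f (reshape Ns s)).
Proof.
elim: Ns s => [|N Ns IH] s hs //=.
apply: pkL_cons; last by apply: IH; rewrite size_drop hs /= addKn.
have hN : size (take N s) = N by rewrite size_takel // hs /= leq_addr.
rewrite tf_proj /tc; hnorm hV; rewrite tupE // coreE /core_def; hnorm hV.
done.
Qed.

Lemma blocksE' (Ns : seq nat) (s : seq nat) : size s = sumn Ns ->
  blocksL X Ns s = map bX (reshape Ns s).
Proof.
elim: Ns s => [|N Ns IH] s hs //=.
have hN : size (take N s) = N by rewrite size_takel // hs /= leq_addr.
rewrite tupE // IH // size_drop hs /= addKn //.
Qed.

Lemma chi_tf f Ns :
  compH (coalg_chi C Ns) (tf f (sumn Ns)) =
  compH (tensorH (@mapHL V (fun n => tensor (nseq n C)) (XTob X) (tf f) Ns)) (XTchi X Ns).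
Proof.
apply: (prod_ext hV) => n.
have hs : size n = sumn Ns by rewrite size_tuple.
rewrite (VcompA hV (coalg_chi C Ns)) tf_proj.
rewrite (VcompA hV (tensorH _)) /XTchi (proj_tup hV).
apply: pk_inj; rewrite /tc; hnorm hV.
rewrite (hc_pair hV (tensorH (mapHL _ _))) -(T_comp hV) (pk_T (MP f hs)).
rewrite (@pk_lam _ (blocksL X Ns n) (map bX (reshape Ns n))); last exact: (blocksE' hs).
rewrite -(pk_compE hV) Chi; hnorm hV.
rewrite reshapeKr ?hs //.
have -> : map size (reshape Ns n) = Ns by apply: reshapeKl; rewrite hs.
done.
Qed.

End Main.

Section Inj.
Variables (V : MonCatData) (hV : is_Monoidal V) (C : Ob V)
  (Delta : forall n : nat, Hom C (tensor (nseq n C))) (hC : is_coalgebra Delta) (X : Ob V).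
Variable t : hCoalgHom (coalg_h Delta) (XT_h X).

Notation T := (sval t).
Notation nC := (fun k : nat => nseq k C).
Notation nX := (fun k : nat => nseq k X).

Lemma tnat cs : compH (T (size cs)) (XTmap X cs) = compH (coalg_map Delta cs) (T (sumn cs)).
Proof. by case: (proj2_sig t) => H _; exact: H. Qed.

Lemma tchi Ns : compH (coalg_chi C Ns) (T (sumn Ns)) =
   compH (tensorH (@mapHL V (fun n => tensor (nseq n C)) (XTob X) T Ns)) (XTchi X Ns).
Proof. by case: (proj2_sig t) => _ H; exact: H. Qed.

Lemma Tpr k k' (u : k.-tuple nat) (u' : k'.-tuple nat) :
  k = k' -> tval u = tval u' -> pk (compH (T k) (projH u)) = pk (compH (T k') (projH u')).
Proof. move=> e; subst k' => e; by rewrite (val_inj e). Qed.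


Lemma nC1 k : map nC (nseq k 1) = map (fun x => [:: x]) (nseq k C).
Proof. by elim: k => //= k ->. Qed.

Lemma stepA (s : seq nat) (n : (size s).-tuple nat) : tval n = s ->
  pk (compH (T (size s)) (projH n)) =
  pk (compH (tensorH (compL (@mapHL V (fun n => tensor (nseq n C)) (XTob X) T (nseq (size s) 1))
                              (prL X (nseq (size s) 1) s)))
            (lam (blocksL X (nseq (size s) 1) s))).
Proof.
move=> hn.
have hsz : size s = sumn (nseq (size s) 1).
  by elim: (size s) => //= m <-; rewrite add1n.
pose o := tup (sumn (nseq (size s) 1)) s.
have ho : tval o = s by rewrite tupE.
have H := f_equal (fun h => pk (compH h (projH o))) (tchi (nseq (size s) 1)).
move: H => /=.
rewrite (VcompA hV (tensorH _)) /XTchi (proj_tup hV) (VcompA hV (coalg_chi C _)).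
rewrite /coalg_chi.
hnorm hV => H.
rewrite (T_comp hV) -(hc_pair hV).
rewrite ho in H; rewrite -H.
rewrite (pk_lam (nC1 _)) (lam_id hV) pk_cast_id (hc_idlg hV); last first.
  rewrite hc_dom /=; congr tensor; elim: (size s) => //= m IH; by rewrite IH.
rewrite -!(pk_compE hV); apply: Tpr => //; by rewrite ho.
Qed.


Definition h := check t.

Lemma g_check : pk (compH (T 1) (projH (tup1))) = pk h.
Proof. rewrite /h /check; hnorm hV; done. Qed.

Lemma compL_ones a :
  pkL (compL (@mapHL V (fun n => tensor (nseq n C)) (XTob X) T (nseq a 1))
             (prL X (nseq a 1) (nseq a 1))) = pkL (fsL h a).
Proof.
elim: a => [|a IH] //=.
rewrite drop0; apply: pkL_cons => //.
rewrite -g_check; apply: (Tpr (erefl 1)).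
by rewrite tupE // take0.
Qed.

Lemma ones a : pk (compH (T a) (projH (nseq_tuple a 1))) = pk (tensorH (fsL h a)).
Proof.
have hs : size (nseq a 1) = a by rewrite size_nseq.
rewrite (@Tpr _ _ _ (tup (size (nseq a 1)) (nseq a 1))) //; last by rewrite tupE.
rewrite stepA; last by rewrite tupE.
rewrite hs (T_comp hV) (pk_compE hV) -(hc_pair hV) (hc_pair hV) -(T_comp hV).
rewrite (pk_T (compL_ones a)).
have -> : blocksL X (nseq a 1) (nseq a 1) = map (fun x => [:: x]) (nseq a X).
  by elim: a {hs} => //= a IH; rewrite drop0 take0 tupE // IH.
rewrite (lam_id hV) pk_cast_id (hc_idrg hV) //.
congr tensor; elim: a {hs} => //= a IH; by rewrite -IH.
Qed.


Lemma stepB a : pk (compH (T 1) (projH [tuple a])) = pk (compH (Delta a) (tensorH (fsL h a))).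
Proof.
pose o := tup (sumn [:: a]) (nseq a 1).
have ho : tval o = nseq a 1 by rewrite tupE // size_nseq /= addn0.
have H := f_equal (fun g => pk (compH g (projH o))) (tnat [:: a]).
move: H; rewrite /coalg_map /= (T_one hV) (lam_1 hV); hnorm hV.
rewrite -(pk_compE hV (XTmap X [:: a])) /XTmap (proj_tup hV); hnorm hV => H.
rewrite -(pk_compE hV (T 1)) -(pk_compE hV (T (a + 0))) in H.
rewrite (@Tpr _ _ o (nseq_tuple a 1) (addn0 a) ho) ones in H.
rewrite (@Tpr 1 1 (pushT o) [tuple a]) // in H; last first.
  by rewrite /= ho take_oversize ?size_nseq // sumn_nseq mul1n.
by rewrite -(pk_compE hV (T 1)).
Qed.


Fixpoint FS1 (s : seq nat) : HomL (HomL (@Hom V)) (map nC s) (map nX s) :=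
  match s with [::] => tt | a :: s' => (fsL h a, FS1 s') end.

Lemma flatFS1 s : pkL (flattenH (FS1 s)) = pkL (fsL h (sumn s)).
Proof. elim: s => [|a s IH] //=; rewrite fsL_cat; exact: pkL_cat. Qed.

Lemma compL_gen s :
  pkL (compL (@mapHL V (fun n => tensor (nseq n C)) (XTob X) T (nseq (size s) 1))
             (prL X (nseq (size s) 1) s)) =
  pkL (compL (DeltaL Delta s) (mapTH (FS1 s))).
Proof.
elim: s => [|a s IH] //=.
rewrite drop0; apply: pkL_cons => //.
rewrite -stepB; apply: (Tpr (erefl 1)).
by rewrite tupE // take0.
Qed.

Lemma blocks_gen s : blocksL X (nseq (size s) 1) s = map nX s.
Proof. elim: s => [|a s IH] //=; by rewrite drop0 take0 tupE // IH /= addn0. Qed.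

Lemma stepG k (n : k.-tuple nat) : pk (compH (T k) (projH n)) = pk (core Delta h n).
Proof.
rewrite (@Tpr _ _ n (tup (size n) n) (esym (size_tuple n))); last by rewrite tupE.
rewrite stepA; last by rewrite tupE.
rewrite (pk_compE hV) (pk_T (compL_gen n)) (pk_lam (blocks_gen n)) -(pk_compE hV) (T_comp hV) (VcompA hV) (lam_nat hV).
rewrite coreE /core_def; hnorm hV.
by rewrite (pk_T (flatFS1 n)).
Qed.

End Inj.

Theorem mainTheorem5 (V : MonCatData) (hV : is_Monoidal V) (C : Ob V)
    (Delta : forall n : nat, Hom C (tensor (nseq n C)))
    (hC : is_coalgebra Delta) (X : Ob V) :
  bijective (@check V C Delta X).
Proof.
pose g (f : Hom C X) : hCoalgHom (coalg_h Delta) (XT_h X) :=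
  exist _ (tf Delta f) (conj (nat_tf hV hC f) (chi_tf hV Delta f)).
exists g.
- move=> t.
  have E : forall k, tf Delta (check t) k = sval t k.
    move=> k; apply: (prod_ext hV) => n.
    rewrite (tf_proj hV); apply: pk_inj; rewrite (stepG hV) /tc.
    by hnorm hV.
  rewrite /g; case: t E => T HT /= E.
  apply: ProofIrrelevanceTheory.subset_eq_compat.
  exact: functional_extensionality_dep E.
- move=> f; apply: pk_inj; rewrite /check /g /=.
  rewrite -(VcompA hV (tf Delta f 1)) (tf_proj hV) /tc coreE /core_def /=.
  rewrite (T_one hV) (T_one hV) (lam_1 hV).
  have [-> _] := hC.
  hnorm hV.
  done.
Qed.
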